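(* Let $A,E\in M_n(\mathbb{FT})$ with $E$ idempotent, and let $\{c_1,\dots,c_k\}$ be a set of representatives of the critical classes of $E$. (i) If $A\le_{\mathcal R}E$, then the rows of $A$ indexed by $c_1,\dots,c_k$ form a generating set for $R(A)$; if moreover $A\,\mathcal{R}\,E$, this generating set is minimal. (ii) If $A\le_{\mathcal L}E$, then the columns of $A$ indexed by $c_1,\dots,c_k$ form a generating set for $C(A)$; if moreover $A\,\mathcal{L}\,E$, this generating set is minimal.
   Context: $\mathbb{FT}$ is $\mathbb{R}$ with $a\oplus b=\max(a,b)$, $a\otimes b=a+b$; $M_n(\mathbb{FT})$ is the semigroup of real $n\times n$ matrices under $(A\otimes B)_{i,j}=\max_k(A_{i,k}+B_{k,j})$. $C(A)$, $R(A)\subseteq\mathbb{R}^n$ are the sets of finite componentwise maxima of real shifts of columns, resp. rows, of $A$; generating sets are with respect to componentwise max and adding real constants. For a semigroup $S$ ($S^1$ = $S$ with identity adjoined if needed): $a\le_{\mathcal R}b$ iff $aS^1\subseteq bS^1$, $a\le_{\mathcal L}b$ iff $S^1a\subseteq S^1b$, $a\,\mathcal R\,b$ iff $aS^1=bS^1$, $a\,\mathcal L\,b$ iff $S^1a=S^1b$. $\Gamma_E$ is the complete weighted digraph on $\{1,\dots,n\}$ with edge $j\to i$ of weight $E_{i,j}$; the maximum cycle mean is the maximum arithmetic mean of edge weights over closed paths; the critical graph consists of all nodes and edges on closed paths attaining the maximum cycle mean; the critical classes are its strongly connected components. *)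

(* Defs.v *)
(* The tropical semifield FT = (R, max, +) is modelled over an
   arbitrary real field R : realFieldType (this includes the reals). *)
From HB Require Import structures.
From mathcomp Require Import all_boot all_order all_algebra.
From Stdlib Require Import Relations.
Set Implicit Arguments. Unset Strict Implicit. Unset Printing Implicit Defensive.
Import Order.TTheory GRing.Theory Num.Theory.
Local Open Scope ring_scope.

Section Tropical.
Variable R : realFieldType.

(* max-plus product: (A (x) B)_{ij} = max_k (A_ik + B_kj).  The seed of the
   iterated max is the term k = i, which is itself one of the terms, so the
   big max is exactly the maximum over k. *)
Definition tmul (n : nat) (A B : 'M[R]_n) : 'M[R]_n :=
  \matrix_(i, j) \big[Num.max/(A i i + B i j)]_(k < n) (A i k + B k j).

Definition tidempotent (n : nat) (E : 'M[R]_n) : Prop := tmul E E = E.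

(* B \in A S^1  (principal right ideal, identity adjoined) *)
Definition in_rideal (n : nat) (A B : 'M[R]_n) : Prop :=
  B = A \/ exists X, B = tmul A X.
Definition in_lideal (n : nat) (A B : 'M[R]_n) : Prop :=
  B = A \/ exists X, B = tmul X A.

(* a <=_R b iff a S^1 \subseteq b S^1 ;  a R b iff a S^1 = b S^1 *)
Definition leR (n : nat) (A B : 'M[R]_n) : Prop :=
  forall C, in_rideal A C -> in_rideal B C.
Definition leL (n : nat) (A B : 'M[R]_n) : Prop :=
  forall C, in_lideal A C -> in_lideal B C.
Definition eqR (n : nat) (A B : 'M[R]_n) : Prop := leR A B /\ leR B A.
Definition eqL (n : nat) (A B : 'M[R]_n) : Prop := leL A B /\ leL B A.

(* Vectors of R^n are functions 'I_n -> R, compared pointwise;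
   subsets of R^n are predicates. *)
Definition vset (n : nat) := ('I_n -> R) -> Prop.

Definition tspan (n : nat) (X : vset n) : vset n := fun v =>
  exists (m : nat) (f : 'I_m.+1 -> 'I_n -> R) (lam : 'I_m.+1 -> R),
    (forall t, X (f t)) /\
    forall i, v i = \big[Num.max/(lam ord0 + f ord0 i)]_(t < m.+1) (lam t + f t i).

Definition generates (n : nat) (X V : vset n) : Prop :=
  forall v, V v <-> tspan X v.

Definition minimal_generates (n : nat) (X V : vset n) : Prop :=
  generates X V /\
  forall Y : vset n, (forall w, Y w -> X w) -> generates Y V -> forall w, X w -> Y w.

Definition rows_of (n : nat) (A : 'M[R]_n) : vset n :=
  fun w => exists i, forall j, w j = A i j.
Definition cols_of (n : nat) (A : 'M[R]_n) : vset n :=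
  fun w => exists j, forall i, w i = A i j.
Definition row_space (n : nat) (A : 'M[R]_n) : vset n := tspan (rows_of A).
Definition col_space (n : nat) (A : 'M[R]_n) : vset n := tspan (cols_of A).

Definition rows_at (n k : nat) (A : 'M[R]_n) (c : 'I_k -> 'I_n) : vset n :=
  fun w => exists t, forall j, w j = A (c t) j.
Definition cols_at (n k : nat) (A : 'M[R]_n) (c : 'I_k -> 'I_n) : vset n :=
  fun w => exists t, forall i, w i = A i (c t).

(* Graph Gamma_E: edge a -> b with weight E b a.  A closed path is a nonempty
   sequence of nodes s = [s_0; ...; s_{m-1}] with edges s_t -> s_{t+1} and
   s_{m-1} -> s_0. *)
Definition cyc_edges (n : nat) (s : seq 'I_n) : seq ('I_n * 'I_n) :=
  match s with
  | [::] => [::]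
  | x :: t => zip (x :: t) (rcons t x)
  end.

Definition cyc_weight (n : nat) (E : 'M[R]_n) (s : seq 'I_n) : R :=
  \sum_(e <- cyc_edges s) E e.2 e.1.

Definition cyc_mean (n : nat) (E : 'M[R]_n) (s : seq 'I_n) : R :=
  cyc_weight E s / (size s)%:R.

Definition critical_cycle (n : nat) (E : 'M[R]_n) (s : seq 'I_n) : Prop :=
  s != [::] /\ forall s', s' != [::] -> cyc_mean E s' <= cyc_mean E s.

Definition crit_node (n : nat) (E : 'M[R]_n) (i : 'I_n) : Prop :=
  exists s, critical_cycle E s /\ i \in s.

Definition crit_edge (n : nat) (E : 'M[R]_n) (a b : 'I_n) : Prop :=
  exists s, critical_cycle E s /\ (a, b) \in cyc_edges s.

Definition same_crit_class (n : nat) (E : 'M[R]_n) (i j : 'I_n) : Prop :=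
  crit_node E i /\ crit_node E j /\
  clos_refl_trans _ (@crit_edge n E) i j /\
  clos_refl_trans _ (@crit_edge n E) j i.

Definition crit_class_reps (n k : nat) (E : 'M[R]_n) (c : 'I_k -> 'I_n) : Prop :=
  (forall t, crit_node E (c t)) /\
  (forall t t', same_crit_class E (c t) (c t') -> t = t') /\
  (forall i, crit_node E i -> exists t, same_crit_class E i (c t)).

End Tropical.

(* Main.v *)
Require Import Defs.
From mathcomp Require Import all_boot all_order all_algebra.
From mathcomp Require Import ring lra.
From Stdlib Require Import Relations FunctionalExtensionality.
Set Implicit Arguments. Unset Strict Implicit. Unset Printing Implicit Defensive.
Import Order.TTheory GRing.Theory Num.Theory.
Local Open Scope ring_scope.



Lemma bm_char (R : realFieldType) (I : finType) (G : I -> R) j0 x :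
  x = \big[Num.max/G j0]_(t : I) G t <->
  (forall t, G t <= x) /\ (exists t, x <= G t).
Proof.
split.
- move=> ->; split; first by move=> t; exact: le_bigmax.
  apply/existsP; apply: contraT; rewrite negb_exists => /forallP H.
  have : \big[Num.max/G j0]_(t : I) G t < \big[Num.max/G j0]_(t : I) G t.
    apply/bigmax_ltP; split; first by have := H j0; rewrite -ltNge.
    by move=> i _; have := H i; rewrite -ltNge.
  by rewrite ltxx.
- move=> [H1 [t Ht]]; apply: le_anti; apply/andP; split.
    exact: (le_trans Ht (le_bigmax _ _ _)).
  by apply: bigmax_le.
Qed.

Lemma tspanP (R : realFieldType) n (X : vset R n) v :
  tspan X v <-> exists m (f : 'I_m.+1 -> 'I_n -> R) (lam : 'I_m.+1 -> R),
    (forall t, X (f t)) /\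
    forall i, (forall t, lam t + f t i <= v i) /\ (exists t, v i <= lam t + f t i).
Proof.
split.
- move=> [m [f [lam [Hf Hv]]]]; exists m, f, lam; split=> // i.
  by have /(bm_char (fun t => lam t + f t i) ord0 (v i)) := Hv i.
- move=> [m [f [lam [Hf Hv]]]]; exists m, f, lam; split=> // i.
  by apply/(bm_char (fun t => lam t + f t i) ord0 (v i)).
Qed.

Lemma tspan_ext (R : realFieldType) n (X : vset R n) u w :
  (forall i, u i = w i) -> tspan X u -> tspan X w.
Proof.
move=> E [m [f [lam [Hf Hv]]]]; exists m, f, lam; split=> // i.
by rewrite -E.
Qed.

Lemma tspan_shift (R : realFieldType) n (X : vset R n) u a :
  tspan X u -> tspan X (fun i => a + u i).
Proof.
move=> /tspanP [m [f [lam [Hf Hv]]]]; apply/tspanP.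
exists m, f, (fun t => a + lam t); split=> // i.
have [H1 [t Ht]] := Hv i; split.
  by move=> t'; rewrite -addrA lerD2l.
by exists t; rewrite -addrA lerD2l.
Qed.

Lemma tspan_max (R : realFieldType) n (X : vset R n) u w :
  tspan X u -> tspan X w -> tspan X (fun i => Num.max (u i) (w i)).
Proof.
move=> /tspanP [m1 [f1 [l1 [Hf1 Hv1]]]] /tspanP [m2 [f2 [l2 [Hf2 Hv2]]]].
apply/tspanP; exists (m1 + m2.+1)%N.
exists (fun t : 'I_(m1.+1 + m2.+1) => match split t with inl a => f1 a | inr b => f2 b end).
exists (fun t : 'I_(m1.+1 + m2.+1) => match split t with inl a => l1 a | inr b => l2 b end).
split.
  by move=> t; case: (split (t : 'I_(m1.+1 + m2.+1))).
move=> i; have [H1 [t1 Ht1]] := Hv1 i; have [H2 [t2 Ht2]] := Hv2 i; split.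
  move=> t; case: (split (t : 'I_(m1.+1 + m2.+1))) => a.
    by apply: le_trans (H1 a) _; rewrite le_max lexx.
  by apply: le_trans (H2 a) _; rewrite le_max lexx orbT.
have [le_uw|lt_wu] := leP (u i) (w i).
  exists (rshift m1.+1 t2); rewrite (unsplitK (inr t2)).
  exact: Ht2.
exists (lshift m2.+1 t1); rewrite (unsplitK (inl t1)).
exact: Ht1.
Qed.

Lemma tspan_big (R : realFieldType) n (X : vset R n) m (F : 'I_m.+1 -> 'I_n -> R) :
  (forall t, tspan X (F t)) ->
  tspan X (fun i => \big[Num.max/F ord0 i]_(t < m.+1) F t i).
Proof.
move=> HF.
pose vm := fun (u w : 'I_n -> R) => fun i => Num.max (u i) (w i).
have E i : (\big[vm/F ord0]_(t < m.+1) F t) i = \big[Num.max/F ord0 i]_(t < m.+1) F t i.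
  by rewrite (big_morph (fun u : 'I_n -> R => u i) (id1 := F ord0 i) (op1 := Num.max)).
apply: (tspan_ext E).
apply: (big_ind (fun u => tspan X u)) => //.
move=> u w Hu Hw; exact: tspan_max.
Qed.

Lemma tspan_closure (R : realFieldType) n (X Y : vset R n) v :
  (forall w, X w -> tspan Y w) -> tspan X v -> tspan Y v.
Proof.
move=> HXY [m [f [lam [Hf Hv]]]].
apply: (tspan_ext (fun i => esym (Hv i))).
apply: (tspan_big (F := fun t i => lam t + f t i)).
move=> t; apply: tspan_shift; exact: HXY.
Qed.

Lemma gen_lemma (R : realFieldType) n k (a e : 'I_n -> 'I_n -> R) (c : 'I_k -> 'I_n) :
  (forall i j l, e i j + a j l <= a i l) ->
  (forall i l, exists t, a i l <= e i (c t) + a (c t) l) ->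
  generates (fun w => exists t, forall j, w j = a (c t) j)
            (tspan (fun w => exists i, forall j, w j = a i j)).
Proof.
move=> H1 H2 v; split.
- apply: tspan_closure => w [i Hw].
  have [t0 _] := H2 i i.
  case: k c H2 t0 => [|k'] c H2 t0; first by case: t0.
  apply/tspanP; exists k', (fun t j => a (c t) j), (fun t => e i (c t)).
  split; first by move=> t; exists t.
  move=> j; rewrite Hw; split; first by move=> t; exact: H1.
  exact: H2.
- move=> [m [f [lam [Hf Hv]]]]; exists m, f, lam; split=> // t.
  by have [s Hs] := Hf t; exists (c s).
Qed.

Lemma min_lemma (R : realFieldType) n k (a e : 'I_n -> 'I_n -> R) (c : 'I_k -> 'I_n) :
  (forall s t, 0 <= e (c s) (c t) + e (c t) (c s) -> s = t) ->
  (forall t, e (c t) (c t) = 0) ->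
  (forall i j lam, (forall l, lam + a j l <= a i l) -> forall l, lam + e j l <= e i l) ->
  (forall (P : R -> 'I_n -> Prop) i l,
     (forall l', exists lam j, P lam j /\ a i l' <= lam + a j l') ->
     exists lam j, P lam j /\ e i l <= lam + e j l) ->
  forall Y : vset R n, (forall w, Y w -> exists t, forall j, w j = a (c t) j) ->
  generates Y (tspan (fun w => exists i, forall j, w j = a i j)) ->
  forall w, (exists t, forall j, w j = a (c t) j) -> Y w.
Proof.
move=> F4 F5 T1 T2 Y HY HG w [t Hw].
have : tspan Y w.
  apply/HG/tspanP; exists 0%N, (fun _ => w), (fun _ => 0); split.
    by move=> _; exists (c t).
  move=> j; split; first by move=> _; rewrite add0r.
  by exists ord0; rewrite add0r.
move=> /tspanP [m [f [lam [Hf Hv]]]].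
pose P := fun (l : R) (j : 'I_n) => exists u s, l = lam u /\ j = c s /\
             forall l', f u l' = a (c s) l'.
have [l0 [j0 [[u [s [-> [-> Hfu]]]] Hle]]] : exists lam j, P lam j /\ e (c t) (c t) <= lam + e j (c t).
  apply: T2 => l'.
  have [_ [u Hu]] := Hv l'.
  have [s Hs] := HY _ (Hf u).
  exists (lam u), (c s); split; first by exists u, s.
  by rewrite -Hs -Hw.
have Hlam : forall l, lam u + a (c s) l <= a (c t) l.
  by move=> l; rewrite -Hfu -Hw; have [H _] := Hv l; exact: H.
have := T1 _ _ _ Hlam (c s); rewrite F5 addr0 => H2.
rewrite F5 in Hle.
have Est : s = t.
  apply: F4.
  have := lerD H2 Hle.
  by rewrite addr0 addrCA lerDl addrC.
have -> : w = f u.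
  by apply: functional_extensionality => j; rewrite Hfu Hw Est.
exact: Hf.
Qed.



Lemma tmul_ge (R : realFieldType) n (A B : 'M[R]_n) i j l :
  A i l + B l j <= tmul A B i j.
Proof. rewrite mxE; exact: (le_bigmax _ (fun k => A i k + B k j)). Qed.

Lemma tmul_att (R : realFieldType) n (A B : 'M[R]_n) i j :
  exists l, tmul A B i j = A i l + B l j.
Proof.
rewrite mxE.
have [_ [l Hl]] := (bm_char (fun k => A i k + B k j) i _).1 erefl.
exists l; apply/le_anti/andP; split; first exact: Hl.
exact: (le_bigmax _ (fun k => A i k + B k j)).
Qed.

Lemma F1 (R : realFieldType) n (E : 'M[R]_n) : tidempotent E ->
  forall i j k, E i k + E k j <= E i j.
Proof. by move=> HE i j k; rewrite -{3}HE; exact: tmul_ge. Qed.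

Lemma F2 (R : realFieldType) n (E : 'M[R]_n) : tidempotent E ->
  forall i, E i i <= 0.
Proof.
move=> HE i; have := F1 HE i i i.
by rewrite -{3}[E i i]add0r lerD2r.
Qed.

Fixpoint pw (R : realFieldType) n (E : 'M[R]_n) (x : 'I_n) (t : seq 'I_n) : R :=
  match t with [::] => 0 | y :: t' => E y x + pw E y t' end.

Lemma sum_zip (R : realFieldType) n (E : 'M[R]_n) x t z :
  \sum_(e <- zip (x :: t) (rcons t z)) E e.2 e.1 = pw E x t + E z (last x t).
Proof.
elim: t x => [|y t IH] x /=; first by rewrite big_cons big_nil addr0 add0r.
by rewrite big_cons IH /= addrA.
Qed.

Lemma cycw_cons (R : realFieldType) n (E : 'M[R]_n) x t :
  cyc_weight E (x :: t) = pw E x t + E x (last x t).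
Proof. exact: sum_zip. Qed.

Lemma pwL (R : realFieldType) n (E : 'M[R]_n) : tidempotent E ->
  forall x t z, pw E x t + E x z <= E (last x t) z.
Proof.
move=> HE x t; elim: t x => [|y t IH] x z /=; first by rewrite add0r.
rewrite -addrA addrCA; apply: le_trans (IH y z).
by rewrite lerD2l; exact: F1.
Qed.

Lemma pwR (R : realFieldType) n (E : 'M[R]_n) : tidempotent E ->
  forall x t z, pw E x t + E z (last x t) <= E z x.
Proof.
move=> HE x t; elim: t x => [|y t IH] x z /=; first by rewrite add0r.
rewrite -addrA; apply: le_trans (F1 HE z x y).
by rewrite addrC lerD2r; exact: IH.
Qed.

Lemma G1 (R : realFieldType) n (E : 'M[R]_n) : tidempotent E ->
  forall s, s != [::] -> cyc_weight E s <= 0.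
Proof.
move=> HE [//|x t] _; rewrite cycw_cons.
exact: le_trans (pwR HE x t x) (F2 HE x).
Qed.

Lemma size_cyc n (s : seq 'I_n) : size (cyc_edges s) = size s.
Proof.
case: s => [//|x t] /=; rewrite size_zip /= size_rcons.
by rewrite minnn.
Qed.

Lemma cyc_rot1 n (s : seq 'I_n) : cyc_edges (rot 1 s) = rot 1 (cyc_edges s).
Proof.
case: s => [//|x [|y t]] //=.
change (cyc_edges (rot 1 (x :: y :: t)) = rot 1 ((x, y) :: zip (y :: t) (rcons t x))).
rewrite !rot1_cons.
change (zip (rcons (y :: t) x) (rcons (rcons t x) y) = rcons (zip (y :: t) (rcons t x)) (x, y)).
by rewrite zip_rcons // size_rcons.
Qed.

Lemma cyc_rot n k (s : seq 'I_n) : (k <= size s)%N ->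
  cyc_edges (rot k s) = rot k (cyc_edges s).
Proof.
elim: k => [|k IH] Hk; first by rewrite !rot0.
rewrite -add1n !rotD ?size_cyc //.
by rewrite cyc_rot1 IH // ltnW.
Qed.

Lemma cycw_rot (R : realFieldType) n (E : 'M[R]_n) k s : (k <= size s)%N ->
  cyc_weight E (rot k s) = cyc_weight E s.
Proof.
move=> Hk; rewrite /cyc_weight cyc_rot //.
by apply: perm_big; rewrite perm_rot.
Qed.

Lemma node_front (R : realFieldType) n (E : 'M[R]_n) s c : c \in s ->
  exists t, cyc_weight E (c :: t) = cyc_weight E s.
Proof.
move=> cs; have Hi : (index c s < size s)%N by rewrite index_mem.
exists (drop (index c s).+1 s ++ take (index c s) s).
rewrite -(cycw_rot E (ltnW Hi)) /rot (drop_nth c Hi) nth_index //.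
Qed.

Lemma edge_front (R : realFieldType) n (E : 'M[R]_n) s a b : (a, b) \in cyc_edges s ->
  exists s' rest, cyc_weight E s' = cyc_weight E s /\ cyc_edges s' = (a, b) :: rest.
Proof.
move=> es.
set m := index (a, b) (cyc_edges s).
have Hi' : (m < size (cyc_edges s))%N by rewrite index_mem.
have Hi : (m <= size s)%N by rewrite -size_cyc ltnW.
exists (rot m s), (drop m.+1 (cyc_edges s) ++ take m (cyc_edges s)).
split; first exact: cycw_rot.
rewrite (cyc_rot Hi) /rot (drop_nth (a, b) Hi').
by rewrite nth_index.
Qed.

Lemma node_bound (R : realFieldType) n (E : 'M[R]_n) : tidempotent E ->
  forall s c, c \in s -> cyc_weight E s <= E c c.
Proof.
move=> HE s c cs; have [t <-] := node_front E cs.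
rewrite cycw_cons; exact: pwR.
Qed.




Lemma edge_bound (R : realFieldType) n (E : 'M[R]_n) : tidempotent E ->
  forall s a b, (a, b) \in cyc_edges s -> 0 <= cyc_weight E s -> 0 <= E a b + E b a.
Proof.
move=> HE s a b es; have [s' [rest [<- He]]] := edge_front E es.
case: s' He => [//|x [|y t]] He.
  change ((x, x) :: [::] = (a, b) :: rest) in He.
  case: He => <- <- _; rewrite cycw_cons /= add0r => H; by rewrite addr_ge0.
change ((x, y) :: zip (y :: t) (rcons t x) = (a, b) :: rest) in He.
case: He => <- <- _; rewrite cycw_cons => H; apply: le_trans H _.
change (E y x + pw E y t + E x (last y t) <= E x y + E y x).
by rewrite -addrA addrC lerD2r; exact: pwR.
Qed.



Lemma sigma_ex (R : realFieldType) n (E : 'M[R]_n) : tidempotent E ->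
  forall l, exists sg : 'I_n -> 'I_n, forall i, E i l = E i (sg i) + E (sg i) l.
Proof.
move=> HE l; exists (fun i => odflt i [pick k | E i l == E i k + E k l]) => i.
case: pickP => [k /eqP //|H].
have [k Hk] := tmul_att E E i l; rewrite HE in Hk.
by have := H k; rewrite Hk eqxx.
Qed.

Fixpoint rl n (sg : 'I_n -> 'I_n) (y : 'I_n) (m : nat) : seq 'I_n :=
  match m with 0 => [::] | m'.+1 => iter m' sg y :: rl sg y m' end.

Lemma pw_rl (R : realFieldType) n (E : 'M[R]_n) l sg :
  (forall i, E i l = E i (sg i) + E (sg i) l) ->
  forall y m, pw E (iter m sg y) (rl sg y m) = E y l - E (iter m sg y) l.
Proof.
move=> Hs y; elim=> [|m IH] /=; first by rewrite subrr.
rewrite IH; have := Hs (iter m sg y); lra.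
Qed.

Lemma last_rl n (sg : 'I_n -> 'I_n) y m : last (iter m sg y) (rl sg y m) = y.
Proof. by elim: m => [|m IH] //=. Qed.

Lemma zero_cycle (R : realFieldType) n (E : 'M[R]_n) l sg :
  (forall i, E i l = E i (sg i) + E (sg i) l) ->
  forall y L, iter L.+1 sg y = y ->
  cyc_weight E (rl sg y L.+1) = 0 /\ y \in rl sg y L.+1.
Proof.
move=> Hs y L HL; split.
  change (cyc_weight E (iter L sg y :: rl sg y L) = 0).
  rewrite cycw_cons last_rl (pw_rl Hs).
  have := Hs (iter L sg y); rewrite -iterS HL; lra.
change (y \in iter L sg y :: rl sg y L).
by rewrite -{1}(last_rl sg y L) mem_last.
Qed.

Lemma path_bound (R : realFieldType) n (E : 'M[R]_n) l sg : tidempotent E ->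
  (forall i, E i l = E i (sg i) + E (sg i) l) ->
  forall i b, E i l <= E i (iter b.+1 sg i) + E (iter b.+1 sg i) l.
Proof.
move=> HE Hs i; elim=> [|b IH]; first by rewrite /= -Hs.
apply: le_trans IH _; rewrite [in X in X <= _](Hs (iter b.+1 sg i)) addrA.
by rewrite lerD2r; exact: F1.
Qed.

Lemma pigeon n (sg : 'I_n -> 'I_n) x0 :
  exists a b, (a < b)%N /\ iter a sg x0 = iter b sg x0.
Proof.
pose f := fun m : 'I_n.+1 => iter m sg x0.
have : ~~ injectiveb f.
  apply/negP => /injectiveP Hi; have := @leq_card _ _ f Hi.
  by rewrite !card_ord ltnn.
move=> /injectivePn [x [y Hxy Hf]].
case: (ltngtP x y) => H.
- by exists x, y.
- by exists y, x.
- by move: Hxy; rewrite (val_inj H) eqxx.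
Qed.

Lemma Zlem (R : realFieldType) n (E : 'M[R]_n) : tidempotent E ->
  forall i l, exists y s, E i l <= E i y + E y l /\ s != [::] /\ y \in s /\
    cyc_weight E s = 0.
Proof.
move=> HE i l; have [sg Hs] := sigma_ex HE l.
have [a [b [Hab Hit]]] := pigeon sg i.
case: b Hab Hit => [//|b'] Hab Hit.
exists (iter b'.+1 sg i).
have [L' HL] : exists L', (b'.+1 - a = L'.+1)%N.
  by exists (b'.+1 - a).-1; rewrite prednK // subn_gt0.
have Hper : iter L'.+1 sg (iter b'.+1 sg i) = iter b'.+1 sg i.
  by rewrite -Hit -iterD -HL subnK // ltnW.
have [Hw Hm] := zero_cycle Hs Hper.
exists (rl sg (iter b'.+1 sg i) L'.+1); split; first exact: path_bound.
by split.
Qed.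



Lemma mean_le0 (R : realFieldType) n (E : 'M[R]_n) : tidempotent E ->
  forall s, s != [::] -> cyc_mean E s <= 0.
Proof.
move=> HE s Hs; rewrite /cyc_mean; apply: mulr_le0_ge0; first exact: G1.
by rewrite invr_ge0 ler0n.
Qed.

Lemma zero_crit (R : realFieldType) n (E : 'M[R]_n) : tidempotent E ->
  forall s, s != [::] -> cyc_weight E s = 0 -> critical_cycle E s.
Proof.
move=> HE s Hs Hw; split=> // s' Hs'.
by rewrite /cyc_mean Hw mul0r; exact: mean_le0.
Qed.

Lemma crit_nonneg (R : realFieldType) n (E : 'M[R]_n) : tidempotent E ->
  forall s, critical_cycle E s -> 0 <= cyc_weight E s.
Proof.
move=> HE [|x t] [Hs Hc] //.
have [y [s0 [_ [Hs0 [_ Hw0]]]]] := Zlem HE x x.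
have := Hc s0 Hs0; rewrite {1}/cyc_mean Hw0 mul0r /cyc_mean pmulr_lge0 //.
by rewrite invr_gt0 ltr0n.
Qed.

Lemma F5 (R : realFieldType) n (E : 'M[R]_n) : tidempotent E ->
  forall c, crit_node E c -> E c c = 0.
Proof.
move=> HE c [s [Hs Hc]]; apply/le_anti/andP; split; first exact: F2.
exact: le_trans (crit_nonneg HE Hs) (node_bound HE Hc).
Qed.

Lemma edge_nonneg (R : realFieldType) n (E : 'M[R]_n) : tidempotent E ->
  forall a b, crit_edge E a b -> 0 <= E a b + E b a.
Proof.
move=> HE a b [s [Hs He]]; apply: (edge_bound HE He); exact: crit_nonneg.
Qed.

Lemma class_lem (R : realFieldType) n (E : 'M[R]_n) : tidempotent E ->
  forall a b, clos_refl_trans _ (@crit_edge R n E) a b -> E a a = 0 ->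
  E b b = 0 /\ 0 <= E a b + E b a.
Proof.
move=> HE a b; elim=> {a b} [a b Hab|a|a b c _ IH1 _ IH2] Haa.
- have H := edge_nonneg HE Hab; split=> //.
  apply/le_anti/andP; split; first exact: F2.
  apply: le_trans H _; rewrite addrC; exact: F1.
- by split=> //; rewrite Haa addr0.
- have [Hbb H1] := IH1 Haa; have [Hcc H2] := IH2 Hbb; split=> //.
  have := F1 HE a c b; have := F1 HE c a b; lra.
Qed.

Lemma KEY (R : realFieldType) n k (E : 'M[R]_n) (c : 'I_k -> 'I_n) :
  tidempotent E -> crit_class_reps E c ->
  forall i l, exists t, E i l <= E i (c t) + E (c t) l.
Proof.
move=> HE [Hc1 [Hc2 Hc3]] i l.
have [y [s [Hle [Hs [Hy Hw]]]]] := Zlem HE i l.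
have Hcy : crit_node E y by exists s; split=> //; exact: zero_crit.
have [t [_ [_ [Hrt _]]]] := Hc3 y Hcy.
exists t; have [_ H] := class_lem HE Hrt (F5 HE Hcy).
have := F1 HE i (c t) y; have := F1 HE (c t) l y; lra.
Qed.

Lemma F4 (R : realFieldType) n k (E : 'M[R]_n) (c : 'I_k -> 'I_n) :
  tidempotent E -> crit_class_reps E c ->
  forall s t, 0 <= E (c s) (c t) + E (c t) (c s) -> s = t.
Proof.
move=> HE [Hc1 [Hc2 Hc3]] s t H.
pose cy := [:: c s; c t].
have Hw : cyc_weight E cy = E (c t) (c s) + E (c s) (c t).
  by rewrite cycw_cons /= addr0.
have Hcr : critical_cycle E cy.
  apply: zero_crit => //; apply/le_anti/andP; split; first exact: G1.
  by rewrite Hw addrC.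
apply: Hc2; split; first exact: Hc1; split; first exact: Hc1.
split; apply: rt_step; exists cy; split=> //; by rewrite /cyc_edges /= !inE eqxx ?orbT.
Qed.



Theorem corollary5p3 (R : realFieldType) (n k : nat) (A E : 'M[R]_n)
    (c : 'I_k -> 'I_n) :
  tidempotent E -> crit_class_reps E c ->
  ((leR A E -> generates (rows_at A c) (row_space A)) /\
   (eqR A E -> minimal_generates (rows_at A c) (row_space A))) /\
  ((leL A E -> generates (cols_at A c) (col_space A)) /\
   (eqL A E -> minimal_generates (cols_at A c) (col_space A))).
Proof.
move=> HE Hc.
have HF1 := F1 HE.
have HKEY := KEY HE Hc.
have HF4 := F4 HE Hc.
have HF5 : forall t, E (c t) (c t) = 0.
  by move=> t; apply: (F5 HE); case: Hc => H _; exact: H.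
have genR : leR A E -> generates (rows_at A c) (row_space A).
  move=> HAE; have [->|[X ->]] : A = E \/ exists X, A = tmul E X.
      by have := HAE A (or_introl erefl); case=> [->|[X ->]]; [left|right; exists X].
    apply: (gen_lemma (a := fun i j => E i j) (e := fun i j => E i j)).
      by move=> i j l /=; exact: HF1.
    exact: HKEY.
  apply: (gen_lemma (a := fun i j => tmul E X i j) (e := fun i j => E i j)).
    move=> i j l /=; have [q ->] := tmul_att E X j l.
    apply: le_trans (tmul_ge E X i l q); have := HF1 i q j; lra.
  move=> i l /=; have [q ->] := tmul_att E X i l.
  have [t Ht] := HKEY i q; exists t.
  have := tmul_ge E X (c t) l q; lra.
have genC : leL A E -> generates (cols_at A c) (col_space A).
  move=> HAE; have [->|[X ->]] : A = E \/ exists X, A = tmul X E.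
      by have := HAE A (or_introl erefl); case=> [->|[X ->]]; [left|right; exists X].
    apply: (gen_lemma (a := fun i j => E j i) (e := fun i j => E j i)).
      by move=> i j l /=; rewrite addrC; exact: HF1.
    by move=> i l /=; have [t Ht] := HKEY l i; exists t; rewrite addrC.
  apply: (gen_lemma (a := fun i j => tmul X E j i) (e := fun i j => E j i)).
    move=> i j l /=; have [q ->] := tmul_att X E l j.
    apply: le_trans (tmul_ge X E l i q); have := HF1 q i j; lra.
  move=> i l /=; have [q ->] := tmul_att X E l i.
  have [t Ht] := HKEY q i; exists t.
  have := tmul_ge X E l (c t) q; lra.
split; split=> //.
- move=> [HAE HEA]; split; first exact: genR.
  have hE : E = A \/ exists Y, E = tmul A Y.
    by have := HEA E (or_introl erefl); case=> [->|[Y ->]]; [left|right; exists Y].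
  apply: (min_lemma (e := fun i j => E i j)) => //.
  + move=> i j lam H l; case: hE => [->|[Y ->]]; first exact: H.
    have [q ->] := tmul_att A Y j l.
    apply: le_trans (tmul_ge A Y i l q); have := H q; lra.
  + move=> P i l H; case: hE => [->|[Y ->]]; first exact: H.
    have [q ->] := tmul_att A Y i l.
    have [lam [j [HP Hj]]] := H q; exists lam, j; split=> //.
    have := tmul_ge A Y j l q; lra.
- move=> [HAE HEA]; split; first exact: genC.
  have hE : E = A \/ exists Y, E = tmul Y A.
    by have := HEA E (or_introl erefl); case=> [->|[Y ->]]; [left|right; exists Y].
  apply: (min_lemma (a := fun i j => A j i) (e := fun i j => E j i)) => //.
  + by move=> s t /=; rewrite addrC; exact: HF4.
  + move=> i j lam H l /=; case: hE => [->|[Y ->]]; first exact: H.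
    have [q ->] := tmul_att Y A l j.
    apply: le_trans (tmul_ge Y A l i q); have := H q; lra.
  + move=> P i l H /=; case: hE => [->|[Y ->]]; first exact: H.
    have [q ->] := tmul_att Y A l i.
    have [lam [j [HP Hj]]] := H q; exists lam, j; split=> //.
    have := tmul_ge Y A l j q; lra.
Qed.
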